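(* Let $\Phi=\{\phi_j\}$ be an orthonormal basis of $L^2([0,1],\mu)$, let $A>0$, $k>1/2$, and let $C\ge A^2/(2k-1)$. Then $$\mathcal{E}_k(\Phi,A)\subseteq\Theta_k(\Phi,A,C)\subseteq\mathcal{A}_k(\Phi,A,C).$$
   Context: Each $f\in L^2([0,1],\mu)$ is written $f=\sum_j\theta_j\phi_j$. $\mathcal{E}_k(\Phi,A)=\{f:|\theta_j|\le Aj^{-k}\ \forall j\ge1\}$. $\Theta_k(\Phi,A,C)$ is the set of $f$ whose coefficients' non-increasing rearrangement by absolute value $\{\theta_{(j)}\}$ satisfies $|\theta_{(j)}|\le Aj^{-k}$ for all $j\ge1$ and with $\sum_{j=J+1}^\infty\theta_j^2\le CJ^{-2k+1}$ for all $J\ge1$. $\mathcal{A}_k(\Phi,A,C)=\{f:|\theta_1|\le A,\ \sum_{j=J+1}^\infty\theta_j^2\le CJ^{-2k+1}\ \forall J\ge1\}$. *)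

(* Defs.v *)
From mathcomp Require Import all_boot all_order all_algebra.
From mathcomp Require Import all_classical all_reals all_analysis.
Set Implicit Arguments. Unset Strict Implicit. Unset Printing Implicit Defensive.
Import Order.TTheory GRing.Theory Num.Theory.
Local Open Scope classical_set_scope.
Local Open Scope ring_scope.

(* Indexing convention: a coefficient sequence th : nat -> R stores
   theta_{n+1} at index n, i.e. th 0 = theta_1, th 1 = theta_2, ... *)

Definition few_exceed (R : realType) (th : nat -> R) (t : R) (n : nat) : Prop :=
  exists s : seq nat, (size s <= n)%N /\ (forall i, t < `|th i| -> i \in s).

(* Non-increasing rearrangement of |th| (distribution-function definition):
   rearr th n = |theta_{(n+1)}|, the (n+1)-th largest absolute value,
   = inf { t >= 0 | #{i : |th i| > t} <= n }. *)
Definition rearr (R : realType) (th : nat -> R) (n : nat) : R :=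
  inf [set t : R | 0 <= t /\ few_exceed th t n].

Definition tail_bound (R : realType) (th : nat -> R) (C k : R) : Prop :=
  forall J : nat, (0 < J)%N ->
    (\sum_(J <= i <oo) ((th i) ^+ 2)%:E <= (C * (J%:R) `^ (1 - 2 * k))%:E)%E.

Definition Ek (R : realType) (F : Type) (coef : F -> nat -> R) (k A : R) : set F :=
  [set f | forall n : nat, `|coef f n| <= A * (n.+1%:R) `^ (- k)].

Definition Thetak (R : realType) (F : Type) (coef : F -> nat -> R) (k A C : R) : set F :=
  [set f | (forall n : nat, rearr (coef f) n <= A * (n.+1%:R) `^ (- k))
           /\ tail_bound (coef f) C k].

Definition Ak (R : realType) (F : Type) (coef : F -> nat -> R) (k A C : R) : set F :=
  [set f | `|coef f 0%N| <= A /\ tail_bound (coef f) C k].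

(* Main.v *)
Require Import Defs.
From mathcomp Require Import all_boot all_order all_algebra.
From mathcomp Require Import all_classical all_reals all_analysis.
From mathcomp Require Import ring lra.
Import Order.TTheory GRing.Theory Num.Theory.
Local Open Scope classical_set_scope.
Local Open Scope ring_scope.

Lemma key (R : realType) (a b p : R) : 0 < a -> a <= b -> 0 < p ->
  p * (b - a) * b `^ (- (p + 1)) <= a `^ (- p) - b `^ (- p).
Proof.
move=> a0 ab p0; have b0 : 0 < b by apply: lt_le_trans ab.
have hln : (b - a) / b <= ln b - ln a.
  have := expR_ge1Dx (ln a - ln b).
  rewrite expRD expRN !lnK ?posrE// mulrBl divff ?gt_eqF //.
  have : 0 <= a / b by rewrite divr_ge0 ?ltW.
  lra.
rewrite /powR !gt_eqF//.
have -> : - (p + 1) * ln b = - p * ln b + - ln b by ring.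
have -> : - p * ln a = - p * ln b + p * (ln b - ln a) by ring.
rewrite !expRD expRN lnK ?posrE//.
set E := expR (- p * ln b).
have E0 : 0 < E by rewrite expR_gt0.
have h1 := expR_ge1Dx (p * (ln b - ln a)).
have h2 : p * ((b - a) / b) <= p * (ln b - ln a) by rewrite ler_pM2l.
have -> : p * (b - a) * (E * b^-1) = E * (p * ((b - a) / b)) by rewrite mulrA; ring.
have : E * (p * ((b - a) / b)) <= E * (expR (p * (ln b - ln a)) - 1).
  rewrite ler_pM2l //; lra.
lra.
Qed.

Lemma powN_anti (R : realType) (x y r : R) : 0 < x -> x <= y -> 0 <= r ->
  y `^ (- r) <= x `^ (- r).
Proof.
move=> x0 xy r0; have y0 : 0 < y by apply: lt_le_trans xy.
rewrite !powRN lef_pV2 ?posrE ?powR_gt0 //.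
by apply: ge0_ler_powR => //; rewrite nnegrE ltW.
Qed.

Lemma sq_powN (R : realType) (x k : R) : 0 < x ->
  (x `^ (- k)) ^+ 2 = x `^ (- (2 * k)).
Proof.
move=> x0; rewrite expr2 -powRD; last by apply/implyP => _; rewrite gt_eqF.
by congr (_ `^ _); ring.
Qed.

Lemma tail_Ek (R : realType) (th : nat -> R) (A k C : R) (hA : 0 < A)
  (hk : 1 / 2 < k) (hC : A ^+ 2 / (2 * k - 1) <= C)
  (hf : forall n : nat, `|th n| <= A * (n.+1%:R) `^ (- k)) :
  tail_bound th C k.
Proof.
move=> J J0.
set p := 2 * k - 1.
have p0 : 0 < p by rewrite /p; lra.
have Cge : 0 <= A ^+ 2 / p by rewrite divr_ge0 ?sqr_ge0 ?ltW.
set g := fun n : nat => (n%:R : R) `^ (1 - 2 * k).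
have hterm : forall i : nat, (0 < i)%N -> th i ^+ 2 <= A ^+ 2 / p * (g i - g i.+1).
  move=> i i0.
  have i0' : (0 : R) < i%:R by rewrite ltr0n.
  have := @key R i%:R i.+1%:R p i0' _ p0.
  rewrite -[i.+1]addn1 natrD addrAC subrr add0r mulr1.
  have -> : - (p + 1) = - (2 * k) by rewrite /p; ring.
  have -> : - p = 1 - 2 * k by rewrite /p; ring.
  rewrite lerDl ler01 => /(_ isT) hk'.
  have h1 : th i ^+ 2 <= A ^+ 2 * (i.+1%:R : R) `^ (- (2 * k)).
    rewrite -sq_powN // -exprMn -real_normK ?num_real // !expr2.
    by apply: ler_pM => //; exact: hf.
  apply: (le_trans h1).
  rewrite /g -[i.+1]addn1 natrD.
  rewrite -[i.+1]addn1 natrD in h1.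
  have -> : A ^+ 2 * ((i%:R : R) + 1) `^ (- (2 * k)) =
     A ^+ 2 / p * (p * ((i%:R : R) + 1) `^ (- (2 * k))).
    by field; rewrite gt_eqF.
  exact: ler_wpM2l.
have C0 : 0 <= C by apply: le_trans hC.
have g0 : forall n, 0 <= g n by move=> n; exact: powR_ge0.
have hc : cvgn (fun n => (\sum_(J <= i < n | true) (th i ^+ 2)%:E)%E).
  by apply: is_cvg_nneseries => n _ _; rewrite lee_fin sqr_ge0.
apply: (lime_le hc).
apply: nearW => N; rewrite sumEFin lee_fin.
case: (leqP N J) => hNJ.
  by rewrite big_geq //; apply: mulr_ge0 C0 (powR_ge0 _ _).
apply: (@le_trans _ _ (\sum_(J <= i < N) (A ^+ 2 / p * (g i - g i.+1)))).
  apply: ler_sum_nat => i /andP[Ji _]; apply: hterm.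
  exact: leq_trans J0 Ji.
rewrite -mulr_sumr.
have ht : \sum_(J <= i < N) (g i - g i.+1) = g J - g N.
  rewrite (@telescope_sumr_eq _ _ _ (fun n => - g n)).
  - by rewrite opprK addrC.
  - exact: ltnW.
  - by move=> i _; rewrite opprK [RHS]addrC.
rewrite ht.
change (A ^+ 2 / p * (g J - g N) <= C * g J).
have gN := g0 N; have gJ := g0 J.
move: Cge hC gN gJ; rewrite -/p; move: (A ^+ 2 / p) (g J) (g N) => X a b.
nra.
Qed.

Lemma rearr_Ek (R : realType) (th : nat -> R) (A k : R) (hA : 0 < A)
  (hk : 1 / 2 < k)
  (hf : forall n : nat, `|th n| <= A * (n.+1%:R) `^ (- k)) :
  forall n : nat, rearr th n <= A * (n.+1%:R) `^ (- k).
Proof.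
move=> n; rewrite /rearr.
set t0 := A * _.
have hS : [set t : R | 0 <= t /\ few_exceed th t n] t0.
  split; first by apply: mulr_ge0 (ltW hA) (powR_ge0 _ _).
  exists (iota 0 n); split; first by rewrite size_iota.
  move=> i hi; rewrite mem_iota /= add0n ltnNge; apply/negP => ni.
  have k0 : 0 <= k by lra.
  have h2 : A * (i.+1%:R : R) `^ (- k) <= t0.
    apply: ler_wpM2l; first exact: ltW hA.
    apply: powN_anti => //.
    by rewrite ler_nat ltnS.
  have := hf i.
  move: hi h2; move: (`|th i|) (A * (i.+1%:R : R) `^ (- k)) => a b.
  lra.
apply: (ge_inf _ hS).
by exists 0 => x [].
Qed.

Lemma abs0_le (R : realType) (th : nat -> R) (A k C : R) (hA : 0 < A)
  (hk : 1 / 2 < k) (hC : A ^+ 2 / (2 * k - 1) <= C)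
  (hr : forall n : nat, rearr th n <= A * (n.+1%:R) `^ (- k))
  (htb : tail_bound th C k) : `|th 0%N| <= A.
Proof.
have p0 : 0 < 2 * k - 1 by lra.
have C0 : 0 <= C.
  apply: le_trans hC; apply: divr_ge0 (sqr_ge0 _) (ltW p0).
have := hr 0%N; rewrite (_ : (0.+1%:R : R) = 1) // powR1 mulr1.
apply: le_trans.
apply: lb_le_inf.
  exists (`|th 0%N| + C + 1); split.
    have := normr_ge0 (th 0%N); lra.
  exists [::]; split => // i.
  rewrite in_nil => hlt.
  suff hle : `|th i| <= `|th 0%N| + C + 1 by move: hle; rewrite leNgt hlt.
  clear hlt; case: i => [|i].
    lra.
  have h := le_trans (@nneseries_lim_ge R (fun j => (th j ^+ 2)%:E) xpredT 1%N i.+2 _) (htb 1%N isT).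
  have {h}h : (\sum_(1 <= j < i.+2) th j ^+ 2 <= C).
    move: h; rewrite sumEFin lee_fin.
    rewrite (_ : (1%:R : R) = 1) // powR1 mulr1; apply; move=> n _ _; rewrite lee_fin; exact: sqr_ge0.
  rewrite big_nat_recr //= in h.
  have hs : 0 <= \sum_(1 <= j < i.+1) th j ^+ 2 by apply: sumr_ge0 => j _; exact: sqr_ge0.
  have := normr_ge0 (th 0%N); have := normr_ge0 (th i.+1).
  rewrite -(real_normK (num_real (th i.+1))) in h.
  move: h hs; move: (`|th i.+1|) (`|th 0%N|) (\sum_(1 <= j < i.+1) th j ^+ 2) => a b c.
  nra.
move=> t [t0 [s [hs hin]]].
move: hs; rewrite leqn0 size_eq0 => /eqP hs0.
rewrite leNgt; apply/negP => /hin; rewrite hs0 in_nil.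
done.
Qed.

Theorem lemma2 (R : realType) (F : Type) (coef : F -> nat -> R)
  (hL2 : forall f : F, (\sum_(0 <= i <oo) ((coef f i) ^+ 2)%:E < +oo)%E)
  (A k C : R) (hA : 0 < A) (hk : 1 / 2 < k) (hC : A ^+ 2 / (2 * k - 1) <= C) :
  Ek coef k A `<=` Thetak coef k A C /\ Thetak coef k A C `<=` Ak coef k A C.
Proof.
split => f.
  move=> hf; split; first exact: rearr_Ek.
  exact: tail_Ek hf.
move=> [hr htb]; split => //.
exact: abs0_le htb.
Qed.
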